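(* Let $n\ge 2$ and let $G$ be a labeled threshold graph on the vertex set $\{1,\dots,n\}$. Then there exists a unique threshold pair $(\pi,w)$ of size $n$ in standard form such that $G=T(\pi,w)$ (equality as labeled graphs).
   Context: A threshold graph is a graph obtainable from the empty graph by repeatedly adding a new vertex that is either adjacent to all existing vertices or to none. A labeled threshold graph on $n$ vertices is a threshold graph with vertex set $\{1,\dots,n\}$; two labeled graphs are equal if they have the same edge set. Let $\mathcal{S}_n$ be the set of permutations of $\{1,\dots,n\}$, written in one-line notation $\pi=\pi_1\pi_2\cdots\pi_n$. A threshold pair of size $n$ is a pair $(\pi,w)$ with $\pi\in\mathcal{S}_n$ and $w=w_1\cdots w_n\in\{+1,-1\}^n$. The graph $T(\pi,w)$ is defined as follows: $G_1$ is the graph with the single vertex $\pi_1$; for $2\le i\le n$, $G_i$ is obtained from $G_{i-1}$ by adding a new vertex $\pi_i$ which is adjacent to every vertex of $G_{i-1}$ if $w_i=+1$ and is isolated if $w_i=-1$; then $T(\pi,w)=G_n$. A threshold pair $(\pi,w)$ of size $n\ge 2$ is in standard form if $w_1=w_2$ and, for all $1\le i<n$, $w_i=w_{i+1}$ implies $\pi_i<\pi_{i+1}$. *)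

(* Defs.v *)
(* Vertices {1,...,n} are represented by 'I_n (label k+1 <-> ordinal k);
   this relabeling preserves the order of labels. *)
From mathcomp Require Import all_boot all_order all_fingroup.
Set Implicit Arguments. Unset Strict Implicit. Unset Printing Implicit Defensive.

Definition simple_graph (n : nat) (E : {set {set 'I_n}}) : Prop :=
  forall e, e \in E -> #|e| = 2.

Inductive threshold_on (n : nat) (E : {set {set 'I_n}}) : {set 'I_n} -> Prop :=
| threshold_nil : threshold_on E set0
| threshold_add (V : {set 'I_n}) (v : 'I_n) :
    v \notin V -> threshold_on E V ->
    ((forall u, u \in V -> [set v; u] \in E) \/ (forall u, u \in V -> [set v; u] \notin E)) ->
    threshold_on E (v |: V).

Definition threshold_graph (n : nat) (E : {set {set 'I_n}}) : Prop :=
  simple_graph E /\ threshold_on E [set: 'I_n].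

(* Threshold pair: pi a permutation, w a sign word (true = +1, false = -1),
   positions indexed by 'I_n (position j <-> index j+1 of the paper). *)
Definition step_edges (n : nat) (pi : {perm 'I_n}) (w : {ffun 'I_n -> bool}) (j : 'I_n)
  : {set {set 'I_n}} :=
  if w j then [set [set pi i; pi j] | i in [set i : 'I_n | (i < j)%N]] else set0.

Definition T (n : nat) (pi : {perm 'I_n}) (w : {ffun 'I_n -> bool}) : {set {set 'I_n}} :=
  \bigcup_(j : 'I_n) step_edges pi w j.

Definition standard_form (n : nat) (pi : {perm 'I_n}) (w : {ffun 'I_n -> bool}) : Prop :=
  (forall i j : 'I_n, val i = 0 -> val j = 1 -> w i = w j) /\
  (forall i j : 'I_n, val j = (val i).+1 -> w i = w j -> (pi i < pi j)%N).

(* Main.v *)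
Require Import Defs.
From mathcomp Require Import all_boot all_order all_fingroup.
From mathcomp Require Import zify.
Set Implicit Arguments. Unset Strict Implicit. Unset Printing Implicit Defensive.

Section Seqs.
Variable n : nat.
Implicit Types (r : seq ('I_n * bool)) (x y z : 'I_n * bool).

Definition verts r : {set 'I_n} := [set u | u \in map fst r].
Definition star (v : 'I_n) (s : bool) (A : {set 'I_n}) : {set {set 'I_n}} :=
  if s then [set [set v; u] | u in A] else set0.
Fixpoint edges r : {set {set 'I_n}} :=
  if r is y :: r' then edges r' :|: star y.1 y.2 (verts r') else set0.
Fixpoint std r : bool :=
  if r is y :: r' then
    if r' is z :: r'' then
      (if r'' is [::] then (y.2 == z.2) && (z.1 < y.1)%N
       else (z.2 == y.2) ==> (z.1 < y.1)%N) && std r'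
    else true
  else true.

Lemma verts_cons y r : verts (y :: r) = y.1 |: verts r.
Proof. by apply/setP => u; rewrite !inE. Qed.

Lemma star_mem v s A (e : {set 'I_n}) : e \in star v s A -> v \in e.
Proof.
rewrite /star; case: s; last by rewrite inE.
by case/imsetP => u _ ->; rewrite !inE eqxx.
Qed.

Lemma edges_sub r (e : {set 'I_n}) : e \in edges r -> e \subset verts r.
Proof.
elim: r => [|y r IH] /=; first by rewrite inE.
rewrite verts_cons; case/setUP => [/IH H|].
  by apply: subset_trans H (subsetUr _ _).
rewrite /star; case: (y.2); last by rewrite inE.
case/imsetP => u uin ->; apply/subsetP => a; rewrite !inE.
rewrite inE in uin.
by case/orP => /eqP ->; rewrite ?eqxx // uin orbT.
Qed.

Lemma edges_cons_notin y r (e : {set 'I_n}) : y.1 \notin e -> (e \in edges (y :: r)) = (e \in edges r).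
Proof.
move=> H /=; rewrite inE; case E: (e \in star _ _ _); last by rewrite orbF.
by rewrite (star_mem E) in H.
Qed.

Lemma edges_tail y r : y.1 \notin verts r ->
  edges r = [set e in edges (y :: r) | y.1 \notin e].
Proof.
move=> Hy; apply/setP => e; rewrite inE.
have [E|E] := boolP (y.1 \in e); last by rewrite edges_cons_notin ?E ?andbT.
rewrite andbF; apply/negbTE/negP => H; move: (subsetP (edges_sub H) _ E).
by rewrite (negbTE Hy).
Qed.

Lemma std_tail y r : std (y :: r) -> std r.
Proof. by case: r => // z r /= /andP []. Qed.

Definition univ r v s := forall u, u \in verts r -> u != v -> ([set v; u] \in edges r) = s.

Lemma head_univ y r : y.1 \notin verts r -> univ (y :: r) y.1 y.2.
Proof.
move=> Hy u; rewrite verts_cons => /setU1P [-> | uin]; first by rewrite eqxx.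
move=> _ /=; rewrite inE /star.
have -> : ([set y.1; u] \in edges r) = false.
  apply/negP => /edges_sub /subsetP /(_ y.1); rewrite !inE eqxx /= => H.
  by move: Hy; rewrite inE H.
case: (y.2) => //=; last by rewrite inE.
by apply/imsetP; exists u.
Qed.

Lemma vertsS y r (u : 'I_n) : u \in verts r -> u \in verts (y :: r).
Proof. by rewrite verts_cons => H; apply: setU1r. Qed.
Lemma verts_head y r : y.1 \in verts (y :: r).
Proof. by rewrite verts_cons setU11. Qed.

Lemma std_cons2 y z t : std [:: y, z & t] -> z.2 = y.2 -> (z.1 < y.1)%N.
Proof.
case: t => [|w t] /=.
  by rewrite andbT => /andP [_ ->].
by case/andP => /implyP H _ E; apply: H; rewrite E.
Qed.

Lemma edges_cons_pair y r (u x : 'I_n) : u != y.1 -> x != y.1 ->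
  ([set u; x] \in edges (y :: r)) = ([set u; x] \in edges r).
Proof.
move=> hu hx; apply: edges_cons_notin.
by rewrite !inE negb_or ![y.1 == _]eq_sym hu hx.
Qed.

Lemma univ_le y r : std (y :: r) -> uniq (map fst (y :: r)) -> r != [::] ->
  forall u, u \in verts (y :: r) -> univ (y :: r) u y.2 -> (u <= y.1)%N.
Proof.
elim: r y => [|z t IH] y // Hstd Huniq _ u Hu Huniv.
have [->|uy] := eqVneq u y.1; first by [].
move: (Huniq); rewrite map_cons cons_uniq => /andP [yn Hu2].
have yz : z.1 != y.1 by apply/eqP => E; move: yn; rewrite map_cons inE E eqxx.
have yt : forall x : 'I_n, x \in verts t -> x != y.1.
  move=> x xin; apply/eqP => E; move: yn; rewrite map_cons inE -E.
  by rewrite inE in xin; rewrite xin orbT.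
have zt : z.1 \notin verts t by move: Hu2; rewrite map_cons cons_uniq inE => /andP [].
have hz := head_univ zt.
move: Hu; rewrite verts_cons => /setU1P [E|]; first by rewrite E eqxx in uy.
rewrite verts_cons => /setU1P [uz|ut].
  case: t IH Hstd Huniq Huniv yt zt hz Hu2 yn => [|w t] IH Hstd Huniq Huniv yt zt hz Hu2 yn.
    by move: Hstd => /=; rewrite andbT uz => /andP [_ /ltnW].
  have wv : w.1 \in verts [:: w & t] by rewrite verts_cons setU11.
  have wz : w.1 != z.1 by apply/eqP => E; move: zt; rewrite -E wv.
  have zy : z.2 = y.2.
    rewrite -(Huniv w.1); first last.
    - by rewrite uz.
    - by do 2 apply: vertsS.
    rewrite edges_cons_pair ?uz ?(yt _ wv) // -(hz w.1) //.
    by apply: vertsS.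
  by rewrite uz; apply: ltnW; apply: std_cons2 Hstd zy.
have zu : z.1 != u by apply/eqP => E; move: zt; rewrite E ut.
have zy : z.2 = y.2.
  rewrite -(Huniv z.1); first last.
  - by rewrite zu.
  - by apply: vertsS; apply: verts_head.
  rewrite edges_cons_pair ?(yt _ ut) // setUC -(hz u) //.
    by apply: vertsS.
  by rewrite eq_sym.
have tn : t != [::] by move: ut; case: (t) => //; rewrite /verts inE.
apply: (leq_trans _ (ltnW (std_cons2 Hstd zy))).
apply: IH => //; first exact: std_tail Hstd.
  by apply: vertsS.
move=> x xin xu.
have xy : x != y.1.
  by move: xin; rewrite verts_cons => /setU1P [-> //|/yt //].
rewrite zy -(Huniv x) ?(@edges_cons_pair y) //.
by apply: vertsS.
Qed.

Lemma card_verts r : uniq (map fst r) -> #|verts r| = size r.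
Proof. by move=> U; rewrite cardsE (card_uniqP U) size_map. Qed.

Lemma sign_eq r (v1 v2 : 'I_n) s1 s2 : (2 <= #|verts r|)%N ->
  v1 \in verts r -> v2 \in verts r -> univ r v1 s1 -> univ r v2 s2 -> s1 = s2.
Proof.
move=> H2 h1 h2 u1 u2.
have [E|ne] := eqVneq v1 v2.
  subst v2.
  have : (0 < #|verts r :\ v1|)%N.
    by move: H2; rewrite (cardsD1 v1 (verts r)) h1 add1n ltnS.
  case/card_gt0P => x; rewrite !inE => /andP [xv xin].
  by rewrite -(u1 x) ?(u2 x) // inE.
by rewrite -(u1 v2) 1?eq_sym // setUC (u2 v1).
Qed.

Lemma verts_tail y r : y.1 \notin verts r -> verts r = verts (y :: r) :\ y.1.
Proof. by move=> H; rewrite verts_cons setU1K. Qed.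

Lemma seq_unique r1 : forall r2, std r1 -> std r2 -> uniq (map fst r1) ->
  uniq (map fst r2) -> (2 <= size r1)%N -> verts r1 = verts r2 ->
  edges r1 = edges r2 -> r1 = r2.
Proof.
elim: r1 => [|y1 r1 IH] r2 //.
case: r2 => [|y2 r2] s1 s2 u1 u2 sz V E.
  by move: (verts_head y1 r1); rewrite V /verts inE.
have sz2 : size (y1 :: r1) = size (y2 :: r2) by rewrite -!card_verts // V.
move: (u1) (u2); rewrite !map_cons !cons_uniq => /andP [n1 u1'] /andP [n2 u2'].
have n1' : y1.1 \notin verts r1 by rewrite inE.
have n2' : y2.1 \notin verts r2 by rewrite inE.
have h1 := head_univ n1'.
have h2 := head_univ n2'.
have h2' : univ (y1 :: r1) y2.1 y2.2 by rewrite /univ V E.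
have c2 : (2 <= #|verts (y1 :: r1)|)%N by rewrite card_verts.
have ne1 : r1 != [::] by case: (r1) sz.
have ne2 : r2 != [::] by case: (r2) sz sz2 => //; case: (r1).
have sg : y1.2 = y2.2.
  apply: (sign_eq c2 _ _ h1 h2'); first exact: verts_head.
  by rewrite V; apply: verts_head.
have l1 : (y2.1 <= y1.1)%N.
  apply: (univ_le s1 u1 ne1); first by rewrite V verts_head.
  by rewrite sg.
have l2 : (y1.1 <= y2.1)%N.
  have h1' : univ (y2 :: r2) y1.1 y1.2 by rewrite /univ -V -E.
  apply: (univ_le s2 u2 ne2); first by rewrite -V verts_head.
  by rewrite -sg.
have ey : y1 = y2.
  have e1 : y1.1 = y2.1 by apply: val_inj; apply/eqP; rewrite eqn_leq l1 l2.
  by rewrite [y1]surjective_pairing [y2]surjective_pairing e1 sg.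
subst y2.
have Vt : verts r1 = verts r2 by rewrite (verts_tail n1') (verts_tail n2') V.
have Et : edges r1 = edges r2 by rewrite (edges_tail n1') (edges_tail n2') E.
have [sz1|sz1] := leqP 2 (size r1).
  congr cons; apply: IH => //.
  - exact: std_tail s1.
  - exact: std_tail s2.
have sz2' : size r2 = size r1 by move: sz2 => /= [->].
move: s1 s2 Vt.
have [z1 ->] : exists z1, r1 = [:: z1] by case: (r1) sz1 ne1 => [|z [|]] //; exists z.
have [z2 ->] : exists z2, r2 = [:: z2].
  case: (r2) sz2' => [|z [|w t]] /=.
  - by move=> Es; move: ne1; rewrite -size_eq0 -Es.
  - by exists z.
  - by move=> Es; move: sz1; rewrite -Es.
rewrite /= !andbT => /andP [/eqP e1 _] /andP [/eqP e2 _].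
rewrite !verts_cons => /setP Vt.
have : z1.1 \in [set z2.1] :|: verts [::] by rewrite -Vt setU11.
rewrite /verts !inE orbF => /eqP e3.
by rewrite [z1]surjective_pairing [z2]surjective_pairing e3 -e1 -e2.
Qed.

Fixpoint ins x r := if r is y :: r' then
  (if r' is [::] then (if (y.1 < x.1)%N then [:: x; (y.1, x.2)] else [:: (y.1, x.2); x])
   else if (y.2 == x.2) && (x.1 < y.1)%N then y :: ins x r' else x :: r)
  else [:: x].

Lemma perm_swap2 (T: eqType) (a b: T) s : perm_eq [:: a, b & s] [:: b, a & s].
Proof. have := perm_catCA [:: a] [:: b] s ([:: b, a & s]). by rewrite /= perm_refl. Qed.

Lemma ins_perm x r : perm_eq (map fst (ins x r)) (x.1 :: map fst r).
Proof.
elim: r => [|y r IH] //=.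
case: r IH => [|z r] IH.
  by case: ifP => _ //=; rewrite perm_swap2.
case: ifP => _ //.
rewrite map_cons; apply: perm_trans (perm_swap2 _ _ _).
by rewrite perm_cons.
Qed.

Lemma size_ins x r : size (ins x r) = (size r).+1.
Proof. by rewrite -(size_map fst) (perm_size (ins_perm x r)) /= size_map. Qed.

Lemma verts_ins x r : verts (ins x r) = x.1 |: verts r.
Proof.
by apply/setP => u; rewrite !inE (perm_mem (ins_perm x r)) inE.
Qed.

Lemma starU v s a A : star v s (a |: A) = star v s [set a] :|: star v s A.
Proof. by rewrite /star; case: s; rewrite ?setU0 // imsetU1 imset_set1. Qed.

Lemma star1 v s a : star v s [set a] = star a s [set v].
Proof. by rewrite /star; case: s => //; rewrite !imset_set1 setUC. Qed.

Lemma verts1 y : verts [:: y] = [set y.1].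
Proof. by apply/setP => u; rewrite !inE. Qed.

Lemma edges_cons y r : edges (y :: r) = edges r :|: star y.1 y.2 (verts r).
Proof. by []. Qed.

Lemma ins_cons2 x y z r : ins x [:: y, z & r] =
  if (y.2 == x.2) && (x.1 < y.1)%N then y :: ins x (z :: r) else [:: x, y, z & r].
Proof. reflexivity. Qed.

Lemma edges_ins x r : edges (ins x r) = edges r :|: star x.1 x.2 (verts r).
Proof.
have s0 : forall v s, star v s (verts [::]) = set0.
  by move=> v [] //; apply/setP => e; rewrite /star inE; apply/negbTE/imsetP => [[u]]; rewrite inE.
case: r => [|y r]; first by rewrite edges_cons; reflexivity.
elim: r y => [|z r IH] y.
  rewrite [ins _ _]/=.
  have e0 : edges [::] = set0 by reflexivity.
  case: ifP => _; rewrite !edges_cons e0 (s0 y.1) set0U set0U !verts1 /=.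
    by rewrite (s0 y.1 x.2).
  by rewrite (s0 x.1 x.2) star1.
rewrite ins_cons2; case: ifP => [/andP [/eqP e _]|_]; last by rewrite edges_cons; reflexivity.
rewrite edges_cons IH verts_ins [in RHS]edges_cons (verts_cons y) !starU e star1.
set A := verts (z :: r).
move: (edges (z :: r)) (star x.1 x.2 A) (star x.1 x.2 [set y.1]) (star y.1 x.2 A) => E0 S1 S2 S3.
apply/setP => u; rewrite !in_setU.
by case: (u \in E0); case: (u \in S1); case: (u \in S2); case: (u \in S3).
Qed.

Lemma std_long y h h' t :
  std [:: y, h, h' & t] = ((h.2 == y.2) ==> (h.1 < y.1)%N) && std [:: h, h' & t].
Proof. reflexivity. Qed.

Lemma ord_neq_lt (a b : 'I_n) : a != b -> ~~ (a < b)%N -> (b < a)%N.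
Proof. by move=> /eqP ne; rewrite -leqNgt leq_eqVlt => /orP [/eqP /val_inj E|//]; rewrite E in ne. Qed.

Lemma std_ins x r : std r -> x.1 \notin verts r -> std (ins x r).
Proof.
case: r => [|y r] //.
elim: r y => [|z r IH] y Hs Hx.
  have xy : x.1 != y.1 by apply: contra Hx => /eqP ->; apply: verts_head.
  rewrite /=; case: ifP => H /=; rewrite eqxx //= andbT; first by rewrite H.
  by apply: ord_neq_lt; rewrite ?H // eq_sym.
have xy : x.1 != y.1 by apply: contra Hx => /eqP ->; apply: verts_head.
have Hx' : x.1 \notin verts (z :: r) by apply: contra Hx; apply: vertsS.
rewrite ins_cons2; case: ifP => [/andP [/eqP e lt]|H].
  have IH' := IH z (std_tail Hs) Hx'.
  have [h [h' [t [E C]]]] : exists h h' t, ins x (z :: r) = [:: h, h' & t] /\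
      ((h.2 == y.2) ==> (h.1 < y.1)%N).
    case: r {IH IH'} Hs Hx Hx' => [|w r] Hs Hx Hx'.
      rewrite /=; case: ifP => _.
        by exists x, (z.1, x.2), [::]; rewrite /= e eqxx lt.
      exists (z.1, x.2), x, [::]; split => //=; apply/implyP => _.
      by move: Hs => /= /andP [/andP [_ ->]].
    rewrite ins_cons2; case: ifP => _.
      have [a [b [c E]]] : exists a b c, ins x (w :: r) = [:: a, b & c].
        by case E: (ins x (w :: r)) (size_ins x (w :: r)) => [|a [|b c]] //; exists a, b, c.
      exists z, a, (b :: c); split; first by rewrite E.
      by apply/implyP => /eqP e2; apply: (std_cons2 Hs).
    by exists x, z, (w :: r); rewrite e eqxx lt.
  by rewrite E std_long C -E IH'.
rewrite std_long Hs andbT.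
apply/implyP => /eqP e; apply: (ord_neq_lt xy).
by move: H; rewrite e eqxx /= => ->.
Qed.
End Seqs.

Lemma subU1 n (v : 'I_n) (V e : {set 'I_n}) : v \notin e -> (e \subset v |: V) = (e \subset V).
Proof.
move=> ve; apply/subsetP/subsetP => H x xe.
  by move: (H x xe); case/setU1P => // E; rewrite -E xe in ve.
by apply: setU1r; apply: H.
Qed.

Lemma exist_seq n (G : {set {set 'I_n}}) V0 : simple_graph G -> threshold_on G V0 ->
  exists r, [/\ std r, uniq (map fst r), verts r = V0 & edges r = [set e in G | e \subset V0]].
Proof.
move=> sG; elim => [|V v vV _ [r [s u ve ed]] H].
  exists [::]; split; [by [] | by [] | by apply/setP => x; rewrite !inE |].
  apply/setP => e; rewrite !inE subset0; symmetry; apply/negbTE/andP => [[eG /eqP e0]].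
  by move: (sG _ eG); rewrite e0 cards0.
have key : forall b, (forall u, u \in V -> ([set v; u] \in G) = b) ->
    exists r, [/\ std r, uniq (map fst r), verts r = v |: V & edges r = [set e in G | e \subset v |: V]].
  move=> b Hb; exists (ins (v, b) r); split.
  - by apply: std_ins => //; rewrite /= ve.
  - by rewrite (perm_uniq (ins_perm _ _)) /= u andbT; move: vV; rewrite -ve inE.
  - by rewrite verts_ins ve.
  rewrite edges_ins ed ve /=; apply/setP => e; rewrite in_setU !inE.
  have [Hv|Hv] := boolP (v \in e); last first.
    rewrite subU1 //; case E: (e \in star v b V) => //; last by rewrite orbF.
    by rewrite (star_mem E) in Hv.
  have -> : e \subset V = false.
    by apply/negbTE/negP => /subsetP /(_ _ Hv); rewrite (negbTE vV).
  rewrite andbF /=; apply/idP/idP.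
    rewrite /star; case: (b) Hb => Hb; last by rewrite inE.
    case/imsetP => w wV ->; rewrite Hb //.
    by apply/subsetP => x; rewrite !inE => /orP [/eqP ->|/eqP ->]; rewrite ?eqxx ?wV ?orbT.
  case/andP => eG esub.
  have /cards2P [a [c [ac Ee]]] : #|e| == 2 by rewrite sG.
  have [w [wv Ew]] : exists w, w != v /\ e = [set v; w].
    move: Hv; rewrite Ee !inE => /orP [/eqP E|/eqP E]; subst v.
      by exists c; split => //; rewrite eq_sym.
    by exists a; split => //; rewrite setUC.
  have wV : w \in V.
    by move: (subsetP esub w); rewrite Ew !inE eqxx orbT => /(_ isT) /orP [/eqP E|//]; rewrite E eqxx in wv.
  move: eG; rewrite Ew Hb // /star => ->.
  by apply/imsetP; exists w.
case: H => H.
  by apply: (key true) => w /H ->.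
by apply: (key false) => w /H /negbTE.
Qed.

Lemma mem_edges_rev n (x0 : 'I_n * bool) (q : seq ('I_n * bool)) (e : {set 'I_n}) :
  e \in edges (rev q) <->
  exists i j, [/\ (i < j)%N, (j < size q)%N, (nth x0 q j).2 &
                 e = [set (nth x0 q i).1; (nth x0 q j).1]].
Proof.
elim/last_ind: q => [|q y IH].
  split; first by rewrite inE.
  by case=> i [j [_ ]].
rewrite rev_rcons edges_cons in_setU size_rcons; split.
  case/orP => [/IH [i [j [ij jq yj E]]]|].
    exists i, j; rewrite !nth_rcons jq (ltn_trans ij jq); split => //.
    exact: ltnW.
  rewrite /star; case: ifP => yb; last by rewrite inE.
  case/imsetP => u; rewrite inE map_rev mem_rev => uq ->.
  exists (index u (map fst q)), (size q).
  rewrite !nth_rcons ltnn eqxx -(size_map (@fst 'I_n bool) q) index_mem uq; split => //.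
  rewrite setUC -(nth_map x0 x0.1) ?nth_index //.
  by rewrite -(size_map (@fst 'I_n bool) q) index_mem.
case=> i [j [ij jq yj E]].
move: jq; rewrite ltnS leq_eqVlt => /orP [/eqP jE|jq].
  subst j; move: yj E; rewrite !nth_rcons ltnn eqxx ij => yj ->.
  apply/orP; right; rewrite /star yj; apply/imsetP; exists (nth x0 q i).1 => //.
    by rewrite inE map_rev mem_rev; apply: map_f; apply: mem_nth.
  by rewrite setUC.
apply/orP; left; apply/IH; exists i, j.
by move: yj E; rewrite !nth_rcons jq (ltn_trans ij jq).
Qed.

Definition rr n (pi : {perm 'I_n}) (w : {ffun 'I_n -> bool}) :=
  rev [seq (pi j, w j) | j <- enum 'I_n].

Lemma nth_q n (pi : {perm 'I_n}) (w : {ffun 'I_n -> bool}) x0 (j : 'I_n) :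
  nth x0 [seq (pi j, w j) | j <- enum 'I_n] j = (pi j, w j).
Proof.
by rewrite (nth_map j) ?size_enum_ord // nth_ord_enum.
Qed.

Lemma size_q n (pi : {perm 'I_n}) (w : {ffun 'I_n -> bool}) :
  size [seq (pi j, w j) | j <- enum 'I_n] = n.
Proof. by rewrite size_map size_enum_ord. Qed.

Lemma mem_T n (pi : {perm 'I_n}) w e :
  e \in T pi w <-> exists i j : 'I_n, [/\ (i < j)%N, w j & e = [set pi i; pi j]].
Proof.
split.
  case/bigcupP => j _; rewrite /step_edges; case: ifP => wj; last by rewrite inE.
  by case/imsetP => i; rewrite inE => ij ->; exists i, j.
case=> i [j [ij wj ->]]; apply/bigcupP; exists j => //.
by rewrite /step_edges wj; apply/imsetP; exists i; rewrite ?inE.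
Qed.

Lemma T_rr n (pi : {perm 'I_n}) w : T pi w = edges (rr pi w).
Proof.
case: n pi w => [|n] pi w.
  have E0 : enum 'I_0 = [::] by apply/size0nil; rewrite size_enum_ord.
  rewrite /T big_ord0 /rr E0; reflexivity.
apply/setP => e; apply/idP/idP.
  case/mem_T => i [j [ij wj E]]; apply/(mem_edges_rev (ord0, true)).
  exists i, j; rewrite !nth_q size_q; split => //.
case/(mem_edges_rev (ord0, true)) => i [j [ij jq wj E]].
rewrite size_q in jq.
have iq : (i < n.+1)%N by apply: ltn_trans ij jq.
move: wj E; rewrite -[i]/(nat_of_ord (Ordinal iq)) -[j]/(nat_of_ord (Ordinal jq)) !nth_q /= => wj E.
by apply/mem_T; exists (Ordinal iq), (Ordinal jq).
Qed.

Definition Pc n (x0 : 'I_n * bool) (r : seq ('I_n * bool)) :=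
  forall a, (a.+1 < size r)%N -> (nth x0 r a.+1).2 = (nth x0 r a).2 ->
    ((nth x0 r a.+1).1 < (nth x0 r a).1)%N.
Definition Qc n (x0 : 'I_n * bool) (r : seq ('I_n * bool)) :=
  (2 <= size r)%N -> (nth x0 r (size r).-2).2 = (nth x0 r (size r).-1).2.

Lemma std_nth n (x0 : 'I_n * bool) r : std r <-> Pc x0 r /\ Qc x0 r.
Proof.
elim: r => [|y [|z t] IH].
- by split => // _; split => // a.
- by split => // _; split => // [[]].
case: t IH => [|w t] IH.
  rewrite /Pc /Qc /=; split.
    rewrite andbT => /andP [/eqP e lt]; split => //.
    by case.
  case=> H1 H2; rewrite andbT H2 // eqxx /=.
  by apply: (H1 0) => //; rewrite H2.
rewrite std_long; split.
  case/andP => /implyP H /IH [H1 H2]; split.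
    case=> [_ e|a]; first by apply: H; rewrite -e eqxx.
    by apply: H1.
  by move=> _; apply: H2.
case=> H1 H2; apply/andP; split.
  by apply/implyP => /eqP e; apply: (H1 0).
by apply/IH; split; [move=> a; apply: (H1 a.+1) | move=> _; apply: H2].
Qed.

Lemma nth_rr n (pi : {perm 'I_n}) (w : {ffun 'I_n -> bool}) x0 a (i : 'I_n) :
  (a < n)%N -> (i : nat) = n - a.+1 -> nth x0 (rr pi w) a = (pi i, w i).
Proof.
move=> an ia; rewrite /rr nth_rev ?size_q // -ia.
exact: nth_q.
Qed.

Lemma size_rr n (pi : {perm 'I_n}) (w : {ffun 'I_n -> bool}) : size (rr pi w) = n.
Proof. by rewrite /rr size_rev size_q. Qed.

Lemma std_rr n (pi : {perm 'I_n}) (w : {ffun 'I_n -> bool}) (x0 : 'I_n * bool) :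
  std (rr pi w) <-> standard_form pi w.
Proof.
rewrite (std_nth x0) /Pc /Qc size_rr; split.
  case=> H1 H2; split.
    move=> i j /= i0 j1.
    have n2 : (2 <= n)%N by move: (ltn_ord j); rewrite j1.
    move: (H2 n2).
    rewrite (@nth_rr _ _ _ x0 n.-2 j); [|lia|lia].
    rewrite (@nth_rr _ _ _ x0 n.-1 i); [|lia|lia].
    by move=> /= ->.
  move=> i j /= ji wij.
  have hj := ltn_ord j.
  have := H1 (n - j.+1).
  rewrite (@nth_rr _ _ _ x0 (n - j.+1).+1 i); [|lia|lia].
  rewrite (@nth_rr _ _ _ x0 (n - j.+1) j); [|lia|lia].
  by move=> /= H; apply: H => //; lia.
case=> S1 S2; split.
  move=> a an.
  have h1 : (n - a.+2 < n)%N by lia.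
  have h2 : (n - a.+1 < n)%N by lia.
  rewrite (@nth_rr _ _ _ x0 a.+1 (Ordinal h1)) /=; [|lia|lia].
  rewrite (@nth_rr _ _ _ x0 a (Ordinal h2)) /=; [|lia|lia].
  move=> e; apply: S2 => //=; lia.
move=> n2.
have h0 : (0 < n)%N by lia.
have h1 : (1 < n)%N by lia.
rewrite (@nth_rr _ _ _ x0 n.-2 (Ordinal h1)) /=; [|lia|lia].
rewrite (@nth_rr _ _ _ x0 n.-1 (Ordinal h0)) /=; [|lia|lia].
by symmetry; apply: S1.
Qed.

Lemma map_fst_rr n (pi : {perm 'I_n}) (w : {ffun 'I_n -> bool}) :
  map fst (rr pi w) = rev (map pi (enum 'I_n)).
Proof. by rewrite /rr map_rev -map_comp. Qed.

Lemma uniq_rr n (pi : {perm 'I_n}) (w : {ffun 'I_n -> bool}) : uniq (map fst (rr pi w)).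
Proof. by rewrite map_fst_rr rev_uniq (map_inj_uniq (@perm_inj _ pi)) enum_uniq. Qed.

Lemma verts_rr n (pi : {perm 'I_n}) (w : {ffun 'I_n -> bool}) : verts (rr pi w) = setT.
Proof.
apply/setP => u; rewrite !inE map_fst_rr mem_rev.
by rewrite -{1}(permKV pi u) map_f ?mem_enum.
Qed.

Lemma rr_inj n (pi pi' : {perm 'I_n}) (w w' : {ffun 'I_n -> bool}) :
  rr pi w = rr pi' w' -> pi = pi' /\ w = w'.
Proof.
move=> E.
have E' : [seq (pi j, w j) | j <- enum 'I_n] = [seq (pi' j, w' j) | j <- enum 'I_n].
  by rewrite -[LHS]revK -[RHS]revK; congr rev.
have H : forall j : 'I_n, (pi j, w j) = (pi' j, w' j).
  by move=> j; rewrite -(nth_q pi w (j, true) j) -(nth_q pi' w' (j, true) j) E'.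
split; [apply/permP => j | apply/ffunP => j]; by case: (H j).
Qed.

Lemma rr_surj n (x0 : 'I_n * bool) (r : seq ('I_n * bool)) :
  uniq (map fst r) -> size r = n -> exists pi w, rr pi w = r.
Proof.
move=> ur sr.
pose q := rev r.
have sq : size q = n by rewrite size_rev.
have uq : uniq (map fst q) by rewrite map_rev rev_uniq.
pose f (j : 'I_n) := (nth x0 q j).1.
have finj : injective f.
  move=> j k; rewrite /f -!(nth_map x0 x0.1) ?sq // => /eqP.
  by rewrite nth_uniq ?size_map ?sq // => /eqP /val_inj.
exists (perm finj), [ffun j : 'I_n => (nth x0 q j).2].
rewrite /rr -[RHS]revK; congr rev.
apply: (@eq_from_nth _ x0); first by rewrite size_q sq.
move=> i; rewrite size_q => hi.
rewrite -[i]/(nat_of_ord (Ordinal hi)) nth_q permE ffunE /f.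
by rewrite -surjective_pairing.
Qed.

Theorem lemma2 (n : nat) (hn : (2 <= n)%N) (G : {set {set 'I_n}}) :
  threshold_graph G ->
  exists pw : {perm 'I_n} * {ffun 'I_n -> bool},
    [/\ standard_form pw.1 pw.2, G = T pw.1 pw.2 &
        forall (pi : {perm 'I_n}) (w : {ffun 'I_n -> bool}),
          standard_form pi w -> G = T pi w -> (pi, w) = pw].
Proof.
case: n hn G => [|[|n]] // _ G [sG tG].
have [r [sr ur vr er]] := exist_seq sG tG.
have er' : edges r = G.
  by rewrite er; apply/setP => e; rewrite inE subsetT andbT.
have szr : size r = n.+2 by rewrite -card_verts // vr cardsT card_ord.
have [pi [w E]] := rr_surj (ord0, true) ur szr.
exists (pi, w); split => /=.
- by apply/(std_rr _ _ (ord0, true)); rewrite E.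
- by rewrite T_rr E.
move=> pi' w' sf' GT.
have : rr pi' w' = rr pi w.
  rewrite E; apply: seq_unique => //.
  - by apply/(std_rr _ _ (ord0, true)).
  - exact: uniq_rr.
  - by rewrite size_rr.
  - by rewrite verts_rr vr.
  - by rewrite -T_rr -GT er'.
by case/rr_inj => -> ->.
Qed.
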